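(* Let $n$ be a security parameter and $F\colon\{0,1\}^{\tilde n}\to\{0,1\}^m$ a function. Fix a 2-universal family $\mathcal{G}=\{g\colon\{0,1\}^{\tilde n}\to\{0,1\}^\ell\}$ and define $F'(x,g)=(F(x),g,g(x))$ on $\{0,1\}^{\tilde n}\times\mathcal{G}$. Then: (i) if $F^{-1}$ has real max-entropy at most $k$, then $(F')^{-1}$ has real max-entropy at most $\max\{k-\ell+s,0\}$ for any $s=\omega(\log n)$; (ii) if $F^{-1}$ has $p$-accessible max-entropy at most $k$, then $(F')^{-1}$ has $(p+2^{-\Omega(s)})$-accessible max-entropy at most $\max\{k-\ell+s,0\}$ for any $s$.
   Context: $\mathcal{G}$ is 2-universal if for every $x\ne x'$, $\Pr_g[g(x)=g(x')]\le2^{-\ell}$ for $g$ uniform in $\mathcal{G}$. For a function $G$ with domain $\mathcal{D}$ and $X$ uniform on $\mathcal{D}$: $G^{-1}$ has real max-entropy at most $k$ if there is a negligible $\varepsilon(n)$ with $\Pr_x[\log|G^{-1}(G(x))|\le k]\ge1-\varepsilon(n)$. A $G$-collision-finder is a randomized algorithm $A$ with $A(x;r)\in G^{-1}(G(x))$ for all $x,r$; $R$ denotes uniform coins. $G^{-1}$ has $p$-accessible max-entropy at most $k$ if for every probabilistic polynomial-time $G$-collision-finder $A$ there are sets $\{\mathcal{L}(x)\}$, each of size at most $2^k$, with $x\in\mathcal{L}(x)$, such that $\Pr[A(X;R)\in\mathcal{L}(X)]\ge1-p$ for all sufficiently large $n$. *)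

(* Defs.v *)
From Stdlib Require Import Reals.
From mathcomp Require Import all_boot.

Set Implicit Arguments.
Unset Strict Implicit.
Unset Printing Implicit Defensive.

Local Open Scope R_scope.

Notation bits k := (k.-tuple bool).

Definition prodF (X Y : nat -> finType) : nat -> finType :=
  fun n => (X n * Y n)%type.

Definition Rleb (x y : R) : bool := if Rle_dec x y then true else false.

Definition prob (T : finType) (P : pred T) : R :=
  (INR #|[set x | P x]| / INR #|T|).

Definition log2 (x : R) : R := (ln x / ln 2).

Definition negligible (eps : nat -> R) : Prop :=
  forall c : nat, exists N : nat, forall n : nat, (N <= n)%N ->
    (Rabs (eps n) <= / (INR n ^ c)).

Definition omega_log (s : nat -> R) : Prop :=
  forall c : R, (0 < c) -> exists N : nat, forall n : nat, (N <= n)%N ->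
    (c * ln (INR n) <= s n).

Definition preimg (A B : finType) (G : A -> B) (x : A) : {set A} :=
  [set x' | G x' == G x].

Definition real_maxent_le (X Y : nat -> finType) (G : forall n, X n -> Y n)
    (k : nat -> R) : Prop :=
  exists eps : nat -> R, negligible eps /\
    forall n : nat,
      (1 - eps n <= prob (fun x : X n => Rleb (log2 (INR #|preimg (G n) x|)) (k n))).

(* randomized algorithms (one per security parameter n), with input and
   output in X n and uniform coins from the finite set coins n *)
Record alg (X : nat -> finType) := Alg {
  coins : nat -> finType;
  run : forall n, X n -> coins n -> X n }.
Arguments coins {X} a n.
Arguments run {X} a n x r.

(* G-collision-finder: A(x;r) in G^{-1}(G(x)) for all x, r (coin space
   nonempty so that uniform coins R make sense) *)
Definition collision_finder (X Y : nat -> finType) (G : forall n, X n -> Y n)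
    (A : alg X) : Prop :=
  (forall n, (0 < #|coins A n|)%N) /\
  forall n (x : X n) (r : coins A n), G n (run A n x r) = G n x.

Definition effClass := forall X : nat -> finType, alg X -> Prop.

Definition acc_maxent_le (X Y : nat -> finType) (G : forall n, X n -> Y n)
    (Eff : effClass) (p k : nat -> R) : Prop :=
  forall A : alg X, Eff X A -> collision_finder G A ->
    exists L : forall n, X n -> {set X n},
      (forall n (x : X n), (INR #|L n x| <= Rpower 2 (k n)) /\ x \in L n x) /\
      exists N : nat, forall n : nat, (N <= n)%N ->
        (1 - p n <= prob (fun xr : (X n * coins A n)%type =>
                             run A n xr.1 xr.2 \in L n xr.1)).

(* 2-universal family: descriptions d in D n, evaluated by ev n d *)
Definition two_universal (nt l : nat -> nat) (D : nat -> finType)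
    (ev : forall n, D n -> bits (nt n) -> bits (l n)) : Prop :=
  forall n (x x' : bits (nt n)), x != x' ->
    (prob (fun d : D n => ev n d x == ev n d x') <= / (2 ^ l n)).

Definition Fprime (nt m l : nat -> nat) (D : nat -> finType)
    (F : forall n, bits (nt n) -> bits (m n))
    (ev : forall n, D n -> bits (nt n) -> bits (l n)) :
    forall n, prodF (fun n => bits (nt n)) D n ->
              prodF (prodF (fun n => bits (m n)) D) (fun n => bits (l n)) n :=
  fun n xg => (F n xg.1, xg.2, ev n xg.2 xg.1).

(* the algorithm that samples g uniformly from D n (as part of its coins),
   runs A' on (x, g) and outputs the first component *)
Definition sample_and_project (X D : nat -> finType) (A' : alg (prodF X D)) : alg X :=
  @Alg X (prodF D (coins A'))
    (fun n x gr => (run A' n (x, gr.1) gr.2).1).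

(* Main.v *)
Require Import Defs.
From Stdlib Require Import Reals Lra.
From mathcomp Require Import all_boot.

Set Implicit Arguments.
Unset Strict Implicit.
Unset Printing Implicit Defensive.
Local Open Scope R_scope.

Lemma INR_addn (m n : nat) : INR (m + n)%N = INR m + INR n.
Proof. exact: plus_INR. Qed.
Lemma INR_muln (m n : nat) : INR (m * n)%N = INR m * INR n.
Proof. exact: mult_INR. Qed.
Lemma INR_leq (m n : nat) : (m <= n)%N -> INR m <= INR n.
Proof. by move/leP; apply: le_INR. Qed.
Lemma INR_gt0 (m : nat) : (0 < m)%N -> 0 < INR m.
Proof. by move/ltP; apply: lt_0_INR. Qed.

Lemma Rleb_P (x y : R) : Rleb x y = true <-> x <= y.
Proof. rewrite /Rleb; case: Rle_dec => //. Qed.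

Lemma sum_le_card (I : finType) (A : {pred I}) (f : I -> nat) (e : R) :
  (forall i, i \in A -> INR (f i) <= e) ->
  INR (\sum_(i in A) f i) <= INR #|A| * e.
Proof.
move=> H; rewrite -big_enum cardE.
have : forall i, i \in enum A -> INR (f i) <= e by move=> i; rewrite mem_enum; apply: H.
elim: (enum A) => [|a s IH] Hs; first by rewrite big_nil /=; lra.
rewrite big_cons INR_addn (_ : size (a :: s) = (size s).+1) // S_INR Rmult_plus_distr_r Rmult_1_l.
have h1 := Hs a (mem_head _ _).
have /IH h2 : forall i, i \in s -> INR (f i) <= e by move=> i hi; apply: Hs; rewrite in_cons hi orbT.
lra.
Qed.

Lemma sum_ge_card (I : finType) (A : {pred I}) (f : I -> nat) (e : R) :
  (forall i, i \in A -> e <= INR (f i)) ->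
  INR #|A| * e <= INR (\sum_(i in A) f i).
Proof.
move=> H; rewrite -big_enum cardE.
have : forall i, i \in enum A -> e <= INR (f i) by move=> i; rewrite mem_enum; apply: H.
elim: (enum A) => [|a s IH] Hs; first by rewrite big_nil /=; lra.
rewrite big_cons INR_addn (_ : size (a :: s) = (size s).+1) // S_INR Rmult_plus_distr_r Rmult_1_l.
have h1 := Hs a (mem_head _ _).
have /IH h2 : forall i, i \in s -> e <= INR (f i) by move=> i hi; apply: Hs; rewrite in_cons hi orbT.
lra.
Qed.

Lemma Rinv_INR_ge0 (n : nat) : 0 <= / INR n.
Proof.
case: n => [|n]; first by rewrite /= Rinv_0; lra.
apply: Rlt_le; apply: Rinv_0_lt_compat; exact: INR_gt0.
Qed.

Lemma prob_mono (T : finType) (P Q : pred T) :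
  (forall x, P x -> Q x) -> prob P <= prob Q.
Proof.
move=> H; rewrite /prob; apply: Rmult_le_compat_r; first exact: Rinv_INR_ge0.
apply: INR_leq; apply: subset_leq_card; apply/subsetP => x; rewrite !inE; exact: H.
Qed.

Lemma prob_split (T : finType) (P Q : pred T) :
  prob P <= prob (fun x => P x && Q x) + prob (fun x => ~~ Q x).
Proof.
rewrite /prob -Rmult_plus_distr_r; apply: Rmult_le_compat_r; first exact: Rinv_INR_ge0.
rewrite -INR_addn; apply: INR_leq.
apply: (leq_trans _ (leq_card_setU _ _)).
apply: subset_leq_card; apply/subsetP => x; rewrite !inE.
by case: (P x); case: (Q x).
Qed.

Lemma prob_fst (A B : finType) (P : pred A) :
  (0 < #|B|)%N -> prob (fun y : (A * B)%type => P y.1) = prob P.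
Proof.
move=> hB; rewrite /prob.
have -> : [set y : (A * B)%type | P y.1] = setX [set x | P x] [set: B].
  by apply/setP => -[a b]; rewrite !inE andbT.
rewrite cardsX cardsT card_prod !INR_muln.
have := INR_gt0 hB; move=> hB'.
case: (posnP #|A|) => hA.
  by rewrite hA /= Rmult_0_l /Rdiv Rinv_0 !Rmult_0_r.
have := INR_gt0 hA; move=> hA'.
field; lra.
Qed.

Lemma card_ind (T : finType) (P : pred T) :
  #|[set x | P x]| = (\sum_(x : T) (if P x then 1 else 0))%N.
Proof.
rewrite -sum1_card big_mkcond /=; apply: eq_bigr => x _; by rewrite inE.
Qed.

Lemma card_pair_sum (A B : finType) (Q : A -> B -> bool) :
  #|[set y : (A * B)%type | Q y.1 y.2]| = (\sum_(a : A) #|[set b | Q a b]|)%N.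
Proof.
rewrite card_ind (eq_bigr (fun a => \sum_(b : B) (if Q a b then 1 else 0))%N); last first.
  by move=> a _; rewrite card_ind.
by rewrite pair_big /=.
Qed.

Lemma prob_avg (A B : finType) (Q : A -> B -> bool) (e : R) :
  (0 < #|A|)%N -> (forall a, prob (Q a) <= e) ->
  prob (fun y : (A * B)%type => Q y.1 y.2) <= e.
Proof.
move=> hA H; rewrite /prob card_pair_sum card_prod INR_muln.
have [a0 _] := card_gt0P hA.
have hA' := INR_gt0 hA.
case: (posnP #|B|) => hB.
  have := H a0; rewrite /prob hB /= /Rdiv Rinv_0 !Rmult_0_r => he.
  by rewrite Rinv_0 Rmult_0_r.
have hB' := INR_gt0 hB.
have Hs : INR (\sum_(a : A) #|[set b | Q a b]|) <= INR #|A| * (e * INR #|B|).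
  apply: sum_le_card => a _.
  have := H a; rewrite /prob => h.
  apply: (Rmult_le_reg_r (/ INR #|B|)); first exact: Rinv_0_lt_compat.
  rewrite Rmult_assoc Rinv_r; lra.
apply: (Rmult_le_reg_r (INR #|A| * INR #|B|)); first exact: Rmult_lt_0_compat.
rewrite /Rdiv Rmult_assoc Rinv_l; last by apply: Rgt_not_eq; apply: Rmult_lt_0_compat.
rewrite Rmult_1_r; nra.
Qed.

Lemma prob_bij (A B : finType) (f : A -> B) (g : B -> A) (P : pred B) :
  cancel f g -> cancel g f -> prob P = prob (fun x => P (f x)).
Proof.
move=> fg gf; rewrite /prob.
have -> : [set y | P y] = f @: [set x | P (f x)].
  apply/setP => y; rewrite inE; apply/idP/imsetP.
    by move=> Py; exists (g y); rewrite ?inE gf.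
  by case=> x; rewrite inE => Px ->.
rewrite card_imset; last exact: can_inj fg.
by rewrite (bij_eq_card (Bijective fg gf)).
Qed.

Lemma ln2_pos : 0 < ln 2.
Proof. have := ln_lt_2; lra. Qed.

Lemma Rpower2_pos (t : R) : 0 < Rpower 2 t.
Proof. exact: exp_pos. Qed.

Lemma Rpower2_log2 (v : R) : 0 < v -> Rpower 2 (log2 v) = v.
Proof.
move=> hv; rewrite /Rpower /log2.
have h2 := ln2_pos.
rewrite (_ : ln v / ln 2 * ln 2 = ln v); last by field; lra.
exact: exp_ln.
Qed.

Lemma log2_Rpower2 (t : R) : log2 (Rpower 2 t) = t.
Proof.
rewrite /log2 ln_Rpower; have h2 := ln2_pos; field; lra.
Qed.

Lemma log2_le (a b : R) : 0 < a -> a <= b -> log2 a <= log2 b.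
Proof.
move=> ha hab; rewrite /log2 /Rdiv; have h2 := ln2_pos.
apply: Rmult_le_compat_r; first by apply: Rlt_le; apply: Rinv_0_lt_compat.
case: (Rle_lt_or_eq_dec _ _ hab) => h; last by rewrite h; lra.
by apply: Rlt_le; apply: ln_increasing.
Qed.

Lemma Rpower2_ge1 (t : R) : 0 <= t -> 1 <= Rpower 2 t.
Proof.
move=> ht; rewrite -(Rpower_O 2); last lra.
apply: Rle_Rpower => //; lra.
Qed.

Lemma Rpower2_le (a b : R) : a <= b -> Rpower 2 a <= Rpower 2 b.
Proof. move=> h; apply: Rle_Rpower => //; lra. Qed.

Lemma log2_le_iff (v t : R) : 0 < v -> v <= Rpower 2 t -> log2 v <= t.
Proof.
move=> hv h; rewrite -(log2_Rpower2 t); exact: log2_le.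
Qed.

Lemma log2_le_Rpower (v t : R) : 0 < v -> log2 v <= t -> v <= Rpower 2 t.
Proof.
move=> hv h; rewrite -(Rpower2_log2 hv); exact: Rpower2_le.
Qed.

Lemma sum_sub_le (I : finType) (B : {pred I}) (f : I -> nat) :
  (\sum_(i in B) f i <= \sum_(i : I) f i)%N.
Proof. apply: (sub_le_big (le := leq)) => //; try exact: leqnn; move=> a b; exact: leq_addr. Qed.

Lemma sum_exchange (D T : finType) (S : {set T}) (E : D -> T -> bool) :
  (\sum_(d : D) #|[set x' in S | E d x']| = \sum_(x' in S) #|[set d | E d x']|)%N.
Proof.
rewrite (eq_bigr (fun d => \sum_(x' : T) (if (x' \in S) && E d x' then 1 else 0))%N); last first.
  by move=> d _; rewrite card_ind.
rewrite exchange_big /= [RHS]big_mkcond /=; apply: eq_bigr => x' _.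
case: (boolP (x' \in S)) => hx /=.
  by rewrite card_ind.
by rewrite big1.
Qed.

Lemma core (D : finType) (nt l : nat) (ev : D -> bits nt -> bits l)
  (hD : (0 < #|D|)%N)
  (hu : forall x x' : bits nt, x != x' -> prob (fun d => ev d x == ev d x') <= / (2 ^ l))
  (S : {set bits nt}) (x : bits nt) (hx : x \in S) (K s : R)
  (hS : INR #|S| <= Rpower 2 K) :
  prob (fun d => ~~ Rleb (INR #|[set x' in S | ev d x' == ev d x]|)
                         (Rpower 2 (Rmax (K - INR l + s) 0))) <= 2 * Rpower 2 (- s).
Proof.
set M := Rpower 2 (Rmax (K - INR l + s) 0).
set cnt := fun d => #|[set x' in S | ev d x' == ev d x]|.
set B := [set d | ~~ Rleb (INR (cnt d)) M].
have hM1 : 1 <= M by apply: Rpower2_ge1; apply: Rmax_r.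
have hD' := INR_gt0 hD.
have h2l : 0 < 2 ^ l by apply: pow_lt; lra.
have hcnt1 : forall d, (1 <= cnt d)%N.
  move=> d; rewrite card_gt0; apply/set0Pn; exists x; by rewrite !inE hx eqxx.
have Hup : INR (\sum_(d : D) cnt d) <= INR #|D| + INR #|S| * (INR #|D| / 2 ^ l).
  rewrite /cnt sum_exchange (bigD1 x) //= INR_addn.
  apply: Rplus_le_compat.
    by apply: INR_leq; apply: max_card.
  apply: (Rle_trans _ (INR #|[pred x' | (x' \in S) && (x' != x)]| * (INR #|D| / 2 ^ l))).
    apply: sum_le_card => x'; move=> /andP [_ hne].
    have := hu _ _ hne; rewrite /prob => h.
    apply: (Rmult_le_reg_r (/ INR #|D|)); first exact: Rinv_0_lt_compat.
    rewrite /Rdiv (Rmult_comm (INR #|D|)) Rmult_assoc Rinv_r; lra.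
  apply: Rmult_le_compat_r.
    by apply: Rlt_le; apply: Rdiv_lt_0_compat.
  apply: INR_leq; apply: subset_leq_card; apply/subsetP => y; rewrite !inE.
  by case/andP.
have Hsplit : (\sum_(d : D) cnt d = #|D| + \sum_(d : D) (cnt d - 1))%N.
  rewrite -sum1_card -big_split /=; apply: eq_bigr => d _.
  by rewrite subnKC.
have Hlow : INR #|B| * (M / 2) <= INR (\sum_(d : D) (cnt d - 1)).
  apply: (Rle_trans _ (INR (\sum_(d in B) (cnt d - 1)))); last first.
    by apply: INR_leq; apply: sum_sub_le.
  apply: sum_ge_card => d; rewrite inE => hB.
  have hlt : M < INR (cnt d).
    apply: Rnot_le_lt => hle; move: hB; rewrite (proj2 (Rleb_P _ _) hle).
    done.
  have hc2 : (1 < cnt d)%N.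
    apply/ltP; apply: INR_lt; rewrite /=; lra.
  have -> : INR (cnt d - 1) = INR (cnt d) - 1.
    rewrite -{2}(subnK (hcnt1 d)) INR_addn /=; lra.
  have h2 : 2 <= INR (cnt d) by apply: (INR_leq (m := 2)).
  lra.
have HB : INR #|B| * M <= 2 * (INR #|S| * (INR #|D| / 2 ^ l)).
  move: Hup; rewrite Hsplit INR_addn => Hup; lra.
rewrite /prob -/cnt -/M -/B.
have hP := Rpower2_pos K.
have hMs := Rpower2_pos s.
have hM : Rpower 2 K * / 2 ^ l * Rpower 2 s <= M.
  rewrite /M -Rpower_pow; last lra.
  rewrite -Rpower_Ropp -!Rpower_plus; apply: Rpower2_le; apply: Rmax_l.
rewrite Rpower_Ropp.
have hB0 : 0 <= INR #|B| by apply: pos_INR.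
have hiQ : 0 < / 2 ^ l by apply: Rinv_0_lt_compat.
have HB2 : INR #|B| * (Rpower 2 K * / 2 ^ l * Rpower 2 s) <= 2 * (Rpower 2 K * (INR #|D| * / 2 ^ l)).
  apply: (Rle_trans _ _ _ (Rmult_le_compat_l _ _ _ hB0 hM)).
  apply: (Rle_trans _ _ _ HB); rewrite /Rdiv.
  apply: Rmult_le_compat_l; first lra.
  apply: Rmult_le_compat_r; last exact: hS.
  by apply: Rlt_le; apply: Rmult_lt_0_compat.
have HB3 : INR #|B| * Rpower 2 s <= 2 * INR #|D|.
  apply: (Rmult_le_reg_r (Rpower 2 K * / 2 ^ l)); first exact: Rmult_lt_0_compat.
  move: HB2; set P := Rpower 2 K; set iQ := / 2 ^ l; set Ms := Rpower 2 s; set DD := INR #|D|; set BB := INR #|B|.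
  move=> HB2; nra.
rewrite /Rdiv.
apply: (Rmult_le_reg_r (INR #|D| * Rpower 2 s)); first exact: Rmult_lt_0_compat.
have e1 : INR #|B| * / INR #|D| * (INR #|D| * Rpower 2 s) = INR #|B| * Rpower 2 s.
  by field; lra.
have e2 : 2 * / Rpower 2 s * (INR #|D| * Rpower 2 s) = 2 * INR #|D|.
  by field; lra.
by rewrite e1 e2.
Qed.

Lemma inv_pow_step (n c : nat) : (2 <= n)%N -> 2 * / (INR n ^ c.+1) <= / (INR n ^ c).
Proof.
move=> hn.
have hn' : 2 <= INR n by apply: (INR_leq (m := 2)).
have hpc : 0 < INR n ^ c by apply: pow_lt; lra.
rewrite /= Rinv_mult.
have hu : / INR n <= / 2 by apply: Rinv_le_contravar; lra.
have hw : 0 < / INR n ^ c by apply: Rinv_0_lt_compat.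
nra.
Qed.

Lemma neg_add (a b : nat -> R) : negligible a -> negligible b -> negligible (fun n => a n + b n).
Proof.
move=> ha hb c.
case: (ha c.+1) => N1 h1; case: (hb c.+1) => N2 h2.
exists (maxn 2 (maxn N1 N2)) => n hn.
move: hn; rewrite !geq_max => /andP [hn2 /andP [hn1 hn2']].
have := h1 n hn1; have := h2 n hn2'; have := inv_pow_step c hn2 => h3 hb' ha'.
apply: (Rle_trans _ _ _ (Rabs_triang _ _)); lra.
Qed.

Lemma neg_pow (s : nat -> R) : omega_log s -> negligible (fun n => 2 * Rpower 2 (- s n)).
Proof.
move=> hs c.
have hl := ln2_pos.
have hc' : 0 < INR c.+2 / ln 2.
  apply: Rdiv_lt_0_compat => //. apply: INR_gt0. done.
case: (hs _ hc') => N hN.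
exists (maxn 2 N) => n; rewrite geq_max => /andP [hn2 hnN].
have h := hN n hnN.
have hn' : 2 <= INR n by apply: (INR_leq (m := 2)).
have hpos := Rpower2_pos (- s n).
rewrite Rabs_pos_eq; last lra.
have e : Rpower 2 (- (INR c.+2 / ln 2 * ln (INR n))) = / (INR n ^ c.+2).
  rewrite -Rpower_pow; last lra.
  rewrite -Rpower_Ropp /Rpower; congr exp; field; lra.
have hle : Rpower 2 (- s n) <= / (INR n ^ c.+2).
  rewrite -e; apply: Rpower2_le; lra.
apply: (Rle_trans _ (2 * / INR n ^ c.+2)); first lra.
apply: (Rle_trans _ _ _ (inv_pow_step c.+1 hn2)).
have hp : 0 < INR n ^ c.+1 by apply: pow_lt; lra.
have : / INR n ^ c.+1 <= / INR n ^ c.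
  apply: (Rle_trans _ (2 * / INR n ^ c.+1)).
    have : 0 < / INR n ^ c.+1 by apply: Rinv_0_lt_compat.
    lra.
  exact: inv_pow_step.
done.
Qed.

Lemma bits_card_gt0 (k : nat) : (0 < #|{: bits k}|)%N.
Proof. apply/card_gt0P; by exists (nseq_tuple k false). Qed.

Lemma prob_false (T : finType) : prob (fun _ : T => false) = 0.
Proof.
rewrite /prob (_ : [set x : T | false] = set0); last by apply/setP => x; rewrite !inE.
by rewrite cards0 /= /Rdiv Rmult_0_l.
Qed.

Lemma combine5 (a b c d e1 e2 t : R) :
  1 - e1 <= a -> a = b -> b <= c + d -> d <= e2 -> c <= t -> 1 - (e1 + e2) <= t.
Proof. lra. Qed.

Lemma combine4 (b c d e1 e2 t : R) :
  1 - e1 <= b -> b <= c + d -> d <= e2 -> c <= t -> 1 - (e1 + e2) <= t.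
Proof. lra. Qed.

Theorem lemma5p11 :
  exists c C : R, 0 < c /\ 0 < C /\
  forall (nt m l : nat -> nat) (F : forall n, bits (nt n) -> bits (m n))
         (D : nat -> finType) (ev : forall n, D n -> bits (nt n) -> bits (l n)),
    (forall n, (0 < #|D n|)%N) ->
    two_universal ev ->
    (* (i) real max-entropy *)
    (forall (k s : nat -> R),
        omega_log s ->
        real_maxent_le F k ->
        real_maxent_le (Fprime F ev) (fun n => Rmax (k n - INR (l n) + s n) 0))
    /\
    (* (ii) accessible max-entropy *)
    (forall Eff : effClass,
        (forall A' : alg (prodF (fun n => bits (nt n)) D),
            Eff _ A' -> Eff _ (sample_and_project A')) ->
        forall (p k s : nat -> R),
        acc_maxent_le F Eff p k ->
        acc_maxent_le (Fprime F ev) Eff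
          (fun n => p n + C * Rpower 2 (- (c * s n)))
          (fun n => Rmax (k n - INR (l n) + s n) 0)).
Proof.
exists 1, 2; split; first lra; split; first lra.
move=> nt m l F D ev hD hu; split.
- move=> k s hs [eps [heps Heps]].
  exists (fun n => eps n + 2 * Rpower 2 (- s n)); split.
    by apply: neg_add => //; exact: neg_pow.
  move=> n.
  pose M := Rpower 2 (Rmax (k n - INR (l n) + s n) 0).
  pose Good := fun x : bits (nt n) => Rleb (log2 (INR #|preimg (F n) x|)) (k n).
  pose small := fun (x : bits (nt n)) (g : D n) =>
    Rleb (INR #|[set x' in preimg (F n) x | ev n g x' == ev n g x]|) M.
  pose bad := fun (x : bits (nt n)) (g : D n) => Good x && ~~ small x g.
  have h1 := Heps n.
  have h2 : prob Good = prob (fun y : (bits (nt n) * D n)%type => Good y.1).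
    by rewrite prob_fst.
  have h3 := prob_split (fun y : (bits (nt n) * D n)%type => Good y.1)
                        (fun y : (bits (nt n) * D n)%type => ~~ bad y.1 y.2).
  have h4 : prob (fun y : (bits (nt n) * D n)%type => ~~ ~~ bad y.1 y.2) <= 2 * Rpower 2 (- s n).
    apply: (Rle_trans _ (prob (fun y : (bits (nt n) * D n)%type => bad y.1 y.2))).
      by apply: prob_mono => y; rewrite negbK.
    apply: prob_avg; first exact: bits_card_gt0.
    move=> a; case: (boolP (Good a)) => hG.
      apply: (Rle_trans _ (prob (fun g => ~~ small a g))).
        by apply: prob_mono => g /andP [].
      have hpos : 0 < INR #|preimg (F n) a|.
        apply: INR_gt0; apply/card_gt0P; exists a; by rewrite inE.
      apply: (core (hD n) (hu n) (x := a) (S := preimg (F n) a) _ (K := k n)).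
        by rewrite inE.
      apply: log2_le_Rpower => //; exact/Rleb_P.
    apply: (Rle_trans _ (prob (fun _ : D n => false))).
      by apply: prob_mono => g; rewrite /bad (negbTE hG).
    rewrite prob_false; have := Rpower2_pos (- s n); lra.
  have h5 : prob (fun y : (bits (nt n) * D n)%type => Good y.1 && ~~ bad y.1 y.2) <=
            prob (fun xg : prodF (fun n => bits (nt n)) D n =>
               Rleb (log2 (INR #|preimg (@Fprime _ _ _ D F ev n) xg|)) (Rmax (k n - INR (l n) + s n) 0)).
    apply: prob_mono => -[x g] /= /andP [hG]; rewrite /bad hG /= negbK => hsm.
    apply/Rleb_P.
    have hpos : 0 < INR #|preimg (@Fprime _ _ _ D F ev n) (x, g)|.
      apply: INR_gt0; apply/card_gt0P; exists (x, g); by rewrite inE.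
    apply: log2_le_iff => //.
    apply: (Rle_trans _ _ _ _ (proj1 (Rleb_P _ _) hsm)).
    apply: INR_leq.
    rewrite -(card_imset _ (f := fun x' => (x', g))); last by move=> a b [].
    apply: subset_leq_card; apply/subsetP => -[y1 y2]; rewrite inE /Fprime /= => /eqP [e1 e2 e3].
    subst y2; apply/imsetP; exists y1 => //; by rewrite !inE e1 e3 !eqxx.
  exact: (combine5 h1 h2 h3 h4 h5).
- move=> Eff hEff p k s hacc A' hA' hcf.
  have hA := hEff A' hA'.
  have hcfA : collision_finder F (sample_and_project A').
    split.
      move=> n; rewrite /= /prodF card_prod muln_gt0 hD; exact: hcf.1 n.
    move=> n x [g r] /=.
    by have := hcf.2 n (x, g) r; rewrite /Fprime => -[h1 _ _].
  case: (hacc _ hA hcfA) => L [hL [N hN]].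
  pose M := fun n => Rpower 2 (Rmax (k n - INR (l n) + s n) 0).
  pose C := fun n (x : bits (nt n)) (g : D n) => [set x' in L n x | ev n g x' == ev n g x].
  pose L' := fun n (xg : prodF (fun n => bits (nt n)) D n) =>
    if Rleb (INR #|C n xg.1 xg.2|) (M n) then (fun x' => (x', xg.2)) @: C n xg.1 xg.2
    else [set xg].
  exists L'; split.
    move=> n [x g]; rewrite /L' /=.
    case: ifP => hsm.
      rewrite card_imset; last by move=> a b [].
      split; first exact/Rleb_P.
      by apply/imsetP; exists x => //; rewrite !inE (hL n x).2 eqxx.
    rewrite cards1 set11; split => //.
    by rewrite /=; apply: Rpower2_ge1; apply: Rmax_r.
  exists N => n hn.
  rewrite Rmult_1_l.
  pose X := bits (nt n).
  pose Cn := coins A' n.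
  rewrite (prob_bij (f := fun y : (X * (D n * Cn))%type => ((y.1, y.2.1), y.2.2))
                    (g := fun z : ((X * D n) * Cn)%type => (z.1.1, (z.1.2, z.2)))); last first.
    by case=> [[a b] c].
    by case=> a [b c].
  pose Pg := fun y : (X * (D n * Cn))%type => (run A' n (y.1, y.2.1) y.2.2).1 \in L n y.1.
  pose bad := fun (x : X) (b : (D n * Cn)%type) => ~~ Rleb (INR #|C n x b.1|) (M n).
  have h1 := hN n hn.
  have h3 := prob_split Pg (fun y : (X * (D n * Cn))%type => ~~ bad y.1 y.2).
  have h4 : prob (fun y : (X * (D n * Cn))%type => ~~ ~~ bad y.1 y.2) <= 2 * Rpower 2 (- s n).
    apply: (Rle_trans _ (prob (fun y : (X * (D n * Cn))%type => bad y.1 y.2))).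
      by apply: prob_mono => y; rewrite negbK.
    apply: prob_avg; first exact: bits_card_gt0.
    move=> a.
    rewrite (prob_fst (fun g : D n => ~~ Rleb (INR #|C n a g|) (M n))); last exact: hcf.1 n.
    apply: (Rle_trans _ _ _ _ (core (hD n) (hu n) (hL n a).2 (s n) (hL n a).1)).
    by apply: prob_mono => g; rewrite /C /M.
  have h5 : prob (fun y : (X * (D n * Cn))%type => Pg y && ~~ bad y.1 y.2) <=
            prob (fun y : (X * (D n * Cn))%type =>
              run A' n ((y.1, y.2.1), y.2.2).1 ((y.1, y.2.1), y.2.2).2 \in L' n ((y.1, y.2.1), y.2.2).1).
    apply: prob_mono => -[x [g r]] /= /andP [hP]; rewrite /bad negbK /= => hsm.
    have hc := hcf.2 n (x, g) r.
    move: hP hc; rewrite /Pg /=.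
    case: (run A' n (x, g) r) => z1 z2 /= hP.
    rewrite /Fprime /= => -[e1 e2 e3]; subst z2.
    rewrite /L' /= hsm; apply/imsetP; exists z1 => //.
    by rewrite !inE hP e3 eqxx.
  exact: (combine4 h1 h3 h4 h5).
Qed.
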